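(* In $FVB_3$, the elements $$h_0=\big[t_{1,2},[t_{2,3},t_{1,3}]\big],\qquad h_1=\big[t_{1,2},[d_{1,2,3},t_{1,3}]\big]$$ generate a subgroup isomorphic to the free group of rank $2$.
   Context: $FVB_3$ is the group with generators $\sigma_1,\sigma_2,\rho_1,\rho_2$ and defining relations $\sigma_i^2=\rho_i^2=1$ ($i=1,2$), $\sigma_1\sigma_2\sigma_1=\sigma_2\sigma_1\sigma_2$, $\rho_1\rho_2\rho_1=\rho_2\rho_1\rho_2$, $\rho_1\rho_2\sigma_1=\sigma_2\rho_1\rho_2$. Define $\lambda_{1,2}=\rho_1\sigma_1$, $\lambda_{2,3}=\rho_2\sigma_2$, $\lambda_{1,3}=\rho_2\lambda_{1,2}\rho_2$; $t_{i,j}=\lambda_{i,j}^2$ and $d_{1,2,3}=\lambda_{2,3}^{-1}\lambda_{1,2}^{-1}\lambda_{2,3}\lambda_{1,3}$. Commutators are $[g,h]=ghg^{-1}h^{-1}$. *)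

(* Defs.v *)
From Stdlib Require Import List.
Import ListNotations.
Set Implicit Arguments.

(* A letter is a generator together with an "inverse" flag. *)
Definition letter (A : Type) := (A * bool)%type.
Definition word (A : Type) := list (letter A).

Definition linv {A : Type} (x : letter A) : letter A := (fst x, negb (snd x)).
Definition winv {A : Type} (w : word A) : word A := rev (map linv w).
Definition gen {A : Type} (a : A) : word A := [(a, false)].
Definition comm {A : Type} (g h : word A) : word A := g ++ h ++ winv g ++ winv h.

(* Equality in the group < A | R > : the smallest equivalence relation on
   words containing free cancellation and deletion of relators in any context,
   i.e. equality modulo the normal closure of R in the free group on A. *)
Inductive pres_eq {A : Type} (R : word A -> Prop) : word A -> word A -> Prop :=
| pe_refl  : forall u, pres_eq R u u
| pe_sym   : forall u v, pres_eq R u v -> pres_eq R v u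
| pe_trans : forall u v w, pres_eq R u v -> pres_eq R v w -> pres_eq R u w
| pe_cancel : forall u v x, pres_eq R (u ++ [x; linv x] ++ v) (u ++ v)
| pe_rel   : forall u v r, R r -> pres_eq R (u ++ r ++ v) (u ++ v).

Definition free_eq {A : Type} : word A -> word A -> Prop := pres_eq (fun _ => False).

Inductive fvb_gen := s1 | s2 | r1 | r2.

Definition FVBw := word fvb_gen.

Definition relator (u v : FVBw) : FVBw := u ++ winv v.

Inductive fvb3_rel : FVBw -> Prop :=
| rel_s1sq : fvb3_rel (relator (gen s1 ++ gen s1) [])
| rel_s2sq : fvb3_rel (relator (gen s2 ++ gen s2) [])
| rel_r1sq : fvb3_rel (relator (gen r1 ++ gen r1) [])
| rel_r2sq : fvb3_rel (relator (gen r2 ++ gen r2) [])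
| rel_sbraid : fvb3_rel (relator (gen s1 ++ gen s2 ++ gen s1) (gen s2 ++ gen s1 ++ gen s2))
| rel_rbraid : fvb3_rel (relator (gen r1 ++ gen r2 ++ gen r1) (gen r2 ++ gen r1 ++ gen r2))
| rel_mixed : fvb3_rel (relator (gen r1 ++ gen r2 ++ gen s1) (gen s2 ++ gen r1 ++ gen r2)).

Definition fvb_eq : FVBw -> FVBw -> Prop := pres_eq fvb3_rel.

Definition lam12 : FVBw := gen r1 ++ gen s1.
Definition lam23 : FVBw := gen r2 ++ gen s2.
Definition lam13 : FVBw := gen r2 ++ lam12 ++ gen r2.
Definition t12 : FVBw := lam12 ++ lam12.
Definition t23 : FVBw := lam23 ++ lam23.
Definition t13 : FVBw := lam13 ++ lam13.
Definition d123 : FVBw := winv lam23 ++ winv lam12 ++ lam23 ++ lam13.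

Definition h0 : FVBw := comm t12 (comm t23 t13).
Definition h1 : FVBw := comm t12 (comm d123 t13).

Definition eval_word {B : Type} (img : B -> FVBw) (u : word B) : FVBw :=
  flat_map (fun x : letter B => if snd x then winv (img (fst x)) else img (fst x)) u.

Definition in_gen_subgroup {B : Type} (img : B -> FVBw) (w : FVBw) : Prop :=
  exists u : word B, fvb_eq w (eval_word img u).

Definition F2w := word bool.

Definition iso_F2_onto (H : FVBw -> Prop) (f : F2w -> FVBw) : Prop :=
  (forall u v, free_eq u v -> fvb_eq (f u) (f v)) /\
  (forall u v, fvb_eq (f (u ++ v)) (f u ++ f v)) /\
  (forall u v, fvb_eq (f u) (f v) -> free_eq u v) /\
  (forall w, H w <-> exists u, fvb_eq w (f u)).

(* Main.v *)
Require Import Defs.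
From Stdlib Require Import List Bool.
Import ListNotations.

Section PE.
Context {A : Type} (R : word A -> Prop).

Lemma pe_ctx : forall a b, pres_eq R a b -> forall c d, pres_eq R (c ++ a ++ d) (c ++ b ++ d).
Proof.
  induction 1; intros c d.
  - apply pe_refl.
  - apply pe_sym; auto.
  - eapply pe_trans; eauto.
  - replace (c ++ (u ++ [x; linv x] ++ v) ++ d) with ((c ++ u) ++ [x; linv x] ++ (v ++ d))
      by (repeat rewrite <- app_assoc; reflexivity).
    replace (c ++ (u ++ v) ++ d) with ((c ++ u) ++ (v ++ d))
      by (repeat rewrite <- app_assoc; reflexivity).
    apply pe_cancel.
  - replace (c ++ (u ++ r ++ v) ++ d) with ((c ++ u) ++ r ++ (v ++ d))
      by (repeat rewrite <- app_assoc; reflexivity).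
    replace (c ++ (u ++ v) ++ d) with ((c ++ u) ++ (v ++ d))
      by (repeat rewrite <- app_assoc; reflexivity).
    apply pe_rel; auto.
Qed.

Lemma linv_linv : forall x : letter A, linv (linv x) = x.
Proof. intros [a b]; unfold linv; simpl; rewrite negb_involutive; reflexivity. Qed.

Lemma winv_cons : forall (x : letter A) w, winv (x :: w) = winv w ++ [linv x].
Proof. intros; unfold winv; simpl; reflexivity. Qed.

Lemma winv_app : forall (a b : word A), winv (a ++ b) = winv b ++ winv a.
Proof. intros; unfold winv; rewrite map_app, rev_app_distr; reflexivity. Qed.

Lemma winv_winv : forall (w : word A), winv (winv w) = w.
Proof.
  induction w; [reflexivity|].
  rewrite winv_cons, winv_app, IHw. simpl. unfold winv. simpl. rewrite linv_linv. reflexivity.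
Qed.

Lemma pe_cancel_w : forall w a b, pres_eq R (a ++ w ++ winv w ++ b) (a ++ b).
Proof.
  induction w; intros a0 b.
  - apply pe_refl.
  - rewrite winv_cons.
    eapply pe_trans.
    2: { apply (pe_cancel R a0 b a). }
    replace (a0 ++ (a :: w) ++ (winv w ++ [linv a]) ++ b)
      with ((a0 ++ [a]) ++ w ++ winv w ++ ([linv a] ++ b))
      by (repeat rewrite <- app_assoc; reflexivity).
    replace (a0 ++ [a; linv a] ++ b) with ((a0 ++ [a]) ++ ([linv a] ++ b))
      by (repeat rewrite <- app_assoc; reflexivity).
    apply IHw.
Qed.
End PE.

Definition L := letter bool.
Definition leqb (x y : L) : bool := Bool.eqb (fst x) (fst y) && Bool.eqb (snd x) (snd y).

Lemma leqb_true : forall x y, leqb x y = true -> x = y.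
Proof.
  intros [a b] [c d]; unfold leqb; simpl; intro H.
  apply andb_true_iff in H as [H1 H2]. apply eqb_prop in H1, H2. subst; reflexivity.
Qed.

Lemma leqb_refl : forall x, leqb x x = true.
Proof. intros [a b]; unfold leqb; simpl; rewrite !eqb_reflx; reflexivity. Qed.

Definition push (x : L) (s : word bool) : word bool :=
  match s with
  | y :: s' => if leqb y (linv x) then s' else x :: s
  | [] => [x]
  end.

Definition Rf (s : word bool) (a : word bool) := fold_right push s a.
Definition reduce (w : word bool) := Rf [] w.

Fixpoint redb (w : word bool) : bool :=
  match w with
  | x :: ((y :: _) as w') => negb (leqb y (linv x)) && redb w'
  | _ => true
  end.
Definition reduced w := redb w = true.

Lemma reduced_tail : forall x w, reduced (x :: w) -> reduced w.
Proof. intros x [|y w] H; unfold reduced in *; simpl in *; auto.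
  apply andb_true_iff in H; tauto. Qed.

Lemma push_reduced : forall x s, reduced s -> reduced (push x s).
Proof.
  intros x [|y s] H; simpl.
  - reflexivity.
  - destruct (leqb y (linv x)) eqn:E.
    + eapply reduced_tail; eauto.
    + unfold reduced; simpl. rewrite E. simpl. exact H.
Qed.

Lemma Rf_reduced : forall s a, reduced s -> reduced (Rf s a).
Proof. induction a; simpl; intros; auto. apply push_reduced; auto. Qed.

Lemma reduce_reduced : forall w, reduced (reduce w).
Proof. intros; apply Rf_reduced; reflexivity. Qed.

Lemma push_cancel : forall x s, reduced s -> push x (push (linv x) s) = s.
Proof.
  intros x [|y s] H; simpl.
  - rewrite leqb_refl. reflexivity.
  - rewrite linv_linv.
    destruct (leqb y x) eqn:E.
    + apply leqb_true in E; subst y.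
      destruct s as [|z s]; simpl.
      * reflexivity.
      * unfold reduced in H; simpl in H. apply andb_true_iff in H as [H1 _].
        apply negb_true_iff in H1. rewrite H1. reflexivity.
    + simpl. rewrite leqb_refl. reflexivity.
Qed.

Lemma Rf_push : forall s x t, reduced s -> Rf s (push x t) = push x (Rf s t).
Proof.
  intros s x [|y t] Hs; simpl.
  - reflexivity.
  - destruct (leqb y (linv x)) eqn:E; simpl.
    + apply leqb_true in E; subst y. rewrite push_cancel; auto. apply Rf_reduced; auto.
    + reflexivity.
Qed.

Lemma Rf_reduce : forall s a, reduced s -> Rf s (reduce a) = Rf s a.
Proof.
  induction a as [|x a IHa]; intros Hs; simpl; [reflexivity|].
  unfold reduce; simpl. rewrite Rf_push; auto. fold (reduce a). rewrite IHa; auto.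
Qed.

Lemma reduce_app : forall a b, reduce (a ++ b) = Rf (reduce b) a.
Proof. intros; unfold reduce, Rf; rewrite fold_right_app; reflexivity. Qed.

Lemma reduce_id : forall w, reduced w -> reduce w = w.
Proof.
  induction w; intros H; [reflexivity|].
  unfold reduce; simpl; fold (reduce w). rewrite IHw by (eapply reduced_tail; eauto).
  destruct w as [|y w]; simpl; [reflexivity|].
  unfold reduced in H; simpl in H; apply andb_true_iff in H as [H1 _].
  apply negb_true_iff in H1; rewrite H1; reflexivity.
Qed.

Lemma reduce_B : forall a b, reduce (a ++ b) = reduce (reduce a ++ b).
Proof.
  intros; rewrite !reduce_app. rewrite Rf_reduce; auto. apply reduce_reduced.
Qed.

Lemma reduce_A : forall a b, reduce (a ++ b) = reduce (a ++ reduce b).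
Proof.
  intros; rewrite !reduce_app. rewrite (reduce_id (reduce b)); auto. apply reduce_reduced.
Qed.

Lemma reduce_ww : forall w, reduce (w ++ winv w) = [].
Proof.
  induction w; [reflexivity|].
  rewrite winv_cons. simpl.
  unfold reduce at 1; simpl; fold (reduce (w ++ winv w ++ [linv a])).
  rewrite app_assoc, reduce_B, IHw. simpl. unfold reduce; simpl.
  rewrite leqb_refl. reflexivity.
Qed.

Lemma reduce_null_mid : forall a z b, reduce z = [] -> reduce (a ++ z ++ b) = reduce (a ++ b).
Proof.
  intros. rewrite (reduce_A a (z ++ b)), (reduce_B z b), H. simpl.
  rewrite <- reduce_A. reflexivity.
Qed.

Lemma reduce_cancel_mid : forall a w b, reduce (a ++ (w ++ winv w) ++ b) = reduce (a ++ b).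
Proof. intros; apply reduce_null_mid, reduce_ww. Qed.

Lemma pe_reduce : forall (R : word bool -> Prop) w, pres_eq R w (reduce w).
Proof.
  intros R w; induction w; [apply pe_refl|].
  unfold reduce; simpl; fold (reduce w).
  eapply pe_trans.
  - pose proof (pe_ctx R _ _ IHw [a] []) as H. rewrite !app_nil_r in H. exact H.
  - simpl.
    destruct (reduce w) as [|y s] eqn:E; simpl; [apply pe_refl|].
    destruct (leqb y (linv a)) eqn:F; [|apply pe_refl].
    apply leqb_true in F; subst y.
    apply (pe_cancel R [] s a).
Qed.

Lemma reduced_suffix : forall a b, reduced (a ++ b) -> reduced b.
Proof. induction a; simpl; intros; auto. apply IHa. eapply reduced_tail; eauto. Qed.

Lemma reduced_glue : forall X c Y, reduced (X ++ [c]) -> reduced (c :: Y) -> reduced (X ++ c :: Y).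
Proof.
  induction X; intros c Y H1 H2; simpl; auto.
  destruct X as [|b X]; simpl in *.
  - unfold reduced in *; simpl in *. apply andb_true_iff in H1 as [H1 _].
    rewrite H1; simpl. exact H2.
  - unfold reduced in *; simpl in *. apply andb_true_iff in H1 as [H1 H3].
    rewrite H1; simpl. apply IHX; auto.
Qed.

(* ---------- representation of FVB_3 in (free group F(x,y)) wr S_3 ---------- *)
Inductive st := P123 | P132 | P213 | P231 | P312 | P321.

Definition sw (k : bool) (t : st) : st :=
  match k, t with
  | false, P123 => P213 | true, P123 => P132
  | false, P132 => P312 | true, P132 => P123
  | false, P213 => P123 | true, P213 => P231
  | false, P231 => P321 | true, P231 => P213
  | false, P312 => P132 | true, P312 => P321
  | false, P321 => P231 | true, P321 => P312
  end.

Definition comp (t : st) : nat * nat * nat :=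
  match t with
  | P123 => (1,2,3) | P132 => (1,3,2) | P213 => (2,1,3)
  | P231 => (2,3,1) | P312 => (3,1,2) | P321 => (3,2,1)
  end.

Definition xw : word bool := [(false,false)].
Definition yw : word bool := [(true,false)].

Definition lamw (pq : nat * nat) : word bool :=
  match pq with
  | (1,2) => xw | (2,1) => winv xw
  | (1,3) => yw | (3,1) => winv yw
  | (2,3) => xw | (3,2) => winv xw
  | _ => []
  end.

Definition pairk (k : bool) (t : st) : nat * nat :=
  let '(a,b,c) := comp t in if k then (b,c) else (a,b).

Definition step (t : st) (x : letter fvb_gen) : st * word bool :=
  match x with
  | (r1, _) => (sw false t, [])
  | (r2, _) => (sw true t, [])
  | (s1, i) => let t' := sw false t in
               if i then (t', winv (lamw (pairk false t))) else (t', lamw (pairk false t'))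
  | (s2, i) => let t' := sw true t in
               if i then (t', winv (lamw (pairk true t))) else (t', lamw (pairk true t'))
  end.

Fixpoint rw (t : st) (w : FVBw) : st * word bool :=
  match w with
  | [] => (t, [])
  | x :: w' => let p := step t x in let q := rw (fst p) w' in (fst q, snd p ++ snd q)
  end.

Lemma step_inv : forall t x,
  fst (step (fst (step t x)) (linv x)) = t /\
  snd (step (fst (step t x)) (linv x)) = winv (snd (step t x)).
Proof. intros t [g i]; destruct t, g, i; split; reflexivity. Qed.

Lemma rw_fst_app : forall a t b, fst (rw t (a ++ b)) = fst (rw (fst (rw t a)) b).
Proof. induction a; intros; simpl; auto. Qed.

Lemma rw_snd_app : forall a t b,
  snd (rw t (a ++ b)) = snd (rw t a) ++ snd (rw (fst (rw t a)) b).
Proof. induction a; intros; simpl; auto. rewrite IHa, app_assoc. reflexivity. Qed.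

Lemma rw_single : forall t y, rw t [y] = (fst (step t y), snd (step t y) ++ []).
Proof. reflexivity. Qed.

Lemma rw_pair : forall t x y, rw t [x; y] =
  (fst (step (fst (step t x)) y), snd (step t x) ++ snd (step (fst (step t x)) y) ++ []).
Proof. reflexivity. Qed.

Lemma rw_winv : forall w t,
  fst (rw (fst (rw t w)) (winv w)) = t /\ snd (rw (fst (rw t w)) (winv w)) = winv (snd (rw t w)).
Proof.
  induction w as [|x w IH]; intros t; simpl; [split; reflexivity|].
  destruct (IH (fst (step t x))) as [H1 H2].
  destruct (step_inv t x) as [S1 S2].
  rewrite winv_cons, rw_fst_app, rw_snd_app, H1, H2, !rw_single.
  rewrite S1, S2, app_nil_r, winv_app. split; reflexivity.
Qed.

Lemma rel_check : forall t r, fvb3_rel r -> fst (rw t r) = t /\ reduce (snd (rw t r)) = [].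
Proof. intros t r H; destruct H; destruct t; split; vm_compute; reflexivity. Qed.

Definition Inv (w : FVBw) (t : st) := (fst (rw t w), reduce (snd (rw t w))).

Lemma invariance : forall u v, fvb_eq u v -> forall t, Inv u t = Inv v t.
Proof.
  induction 1; intros t; unfold Inv in *.
  - reflexivity.
  - rewrite IHpres_eq; reflexivity.
  - rewrite IHpres_eq1; auto.
  - destruct (step_inv (fst (rw t u)) x) as [S1 S2].
    repeat rewrite ?rw_fst_app, ?rw_snd_app.
    rewrite !rw_pair, S1, S2, app_nil_r.
    cbn [fst snd]. f_equal. rewrite reduce_cancel_mid. reflexivity.
  - destruct (rel_check (fst (rw t u)) r H) as [S1 S2].
    repeat rewrite ?rw_fst_app, ?rw_snd_app. rewrite S1.
    f_equal. rewrite reduce_null_mid; auto.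
Qed.

Definition img (b : bool) : FVBw := if b then h1 else h0.
Definition fmap (u : F2w) : FVBw := eval_word img u.

Definition Xb (b : bool) : word bool := snd (rw P123 (img b)).
Definition Z (x : letter bool) : word bool := if snd x then winv (Xb (fst x)) else Xb (fst x).
Definition Psi (u : F2w) : word bool := flat_map Z u.

Definition Yl (x : letter bool) := reduce (Z x).
Definition Ll x := firstn 5 (Yl x).
Definition cl x := nth 5 (Yl x) (false,false).
Definition Rl x := skipn 6 (Yl x).

Lemma img_fix : forall b, fst (rw P123 (img b)) = P123.
Proof. destruct b; vm_compute; reflexivity. Qed.

Lemma Y_dec : forall x, Yl x = Ll x ++ cl x :: Rl x.
Proof. intros [[|] [|]]; vm_compute; reflexivity. Qed.

Lemma pair_cond : forall x y, leqb y (linv x) = false ->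
  reduced ((Ll x ++ cl x :: reduce (Rl x ++ Ll y)) ++ [cl y]).
Proof. intros [[|] [|]] [[|] [|]] H; vm_compute in H; try discriminate H; vm_compute; reflexivity. Qed.

Lemma Z_linv : forall x, Z (linv x) = winv (Z x).
Proof. intros [b [|]]; unfold Z, linv; simpl; rewrite ?winv_winv; reflexivity. Qed.

Lemma Psi_app : forall a b, Psi (a ++ b) = Psi a ++ Psi b.
Proof. intros; unfold Psi; apply flat_map_app. Qed.

Lemma Psi_winv : forall v, Psi (winv v) = winv (Psi v).
Proof.
  induction v as [|x v IH]; [reflexivity|].
  rewrite winv_cons, Psi_app, IH. simpl. rewrite app_nil_r, Z_linv, winv_app. reflexivity.
Qed.

Lemma Psi_push : forall x s, reduce (Psi (push x s)) = reduce (Psi (x :: s)).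
Proof.
  intros x [|y s]; simpl; [reflexivity|].
  destruct (leqb y (linv x)) eqn:E; [|reflexivity].
  apply leqb_true in E; subst y. rewrite Z_linv.
  pose proof (reduce_cancel_mid [] (Z x) (Psi s)) as H. simpl in H.
  rewrite app_assoc. rewrite H. reflexivity.
Qed.

Lemma Psi_reduce : forall w, reduce (Psi (reduce w)) = reduce (Psi w).
Proof.
  induction w as [|x w IH]; [reflexivity|].
  unfold reduce at 2; simpl; fold (reduce w).
  rewrite Psi_push. simpl.
  rewrite reduce_A, IH, <- reduce_A. reflexivity.
Qed.

Lemma comb : forall q x, reduced (x :: q) -> exists W, reduce (Psi (x :: q)) = Ll x ++ cl x :: W.
Proof.
  induction q as [|y q IH]; intros x H.
  - exists (Rl x). simpl. rewrite app_nil_r. rewrite <- Y_dec. reflexivity.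
  - assert (Hxy : leqb y (linv x) = false).
    { unfold reduced in H; simpl in H. apply andb_true_iff in H as [H _].
      apply negb_true_iff in H; exact H. }
    destruct (IH y (reduced_tail _ _ H)) as [W HW].
    exists (reduce (Rl x ++ Ll y) ++ cl y :: W).
    change (Psi (x :: y :: q)) with (Z x ++ Psi (y :: q)).
    rewrite reduce_A, HW, reduce_B. fold (Yl x). rewrite Y_dec.
    replace ((Ll x ++ cl x :: Rl x) ++ Ll y ++ cl y :: W)
      with ((Ll x ++ [cl x]) ++ ((Rl x ++ Ll y) ++ cl y :: W))
      by (repeat rewrite <- app_assoc; reflexivity).
    rewrite (reduce_A (Ll x ++ [cl x]) ((Rl x ++ Ll y) ++ cl y :: W)),
      (reduce_B (Rl x ++ Ll y) (cl y :: W)),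
      <- (reduce_A (Ll x ++ [cl x]) (reduce (Rl x ++ Ll y) ++ cl y :: W)).
    rewrite reduce_id.
    + repeat rewrite <- app_assoc; reflexivity.
    + replace ((Ll x ++ [cl x]) ++ reduce (Rl x ++ Ll y) ++ cl y :: W)
        with ((Ll x ++ cl x :: reduce (Rl x ++ Ll y)) ++ cl y :: W)
        by (repeat rewrite <- app_assoc; reflexivity).
      apply reduced_glue.
      * apply pair_cond; auto.
      * apply (reduced_suffix (Ll y)). rewrite <- HW. apply reduce_reduced.
Qed.

Lemma Psi_inj0 : forall q, reduced q -> reduce (Psi q) = [] -> q = [].
Proof.
  intros [|x q] H1 H2; auto.
  destruct (comb q x H1) as [W HW]. rewrite HW in H2. destruct (Ll x); discriminate.
Qed.

Lemma rw_f : forall u, fst (rw P123 (fmap u)) = P123 /\ snd (rw P123 (fmap u)) = Psi u.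
Proof.
  induction u as [|[b i] u [IH1 IH2]]; [split; reflexivity|].
  destruct i.
  - change (fmap ((b, true) :: u)) with (winv (img b) ++ fmap u).
    rewrite rw_fst_app, rw_snd_app.
    pose proof (rw_winv (img b) P123) as [A1 A2]. rewrite img_fix in A1, A2.
    rewrite A1, A2, IH1, IH2. split; reflexivity.
  - change (fmap ((b, false) :: u)) with (img b ++ fmap u).
    rewrite rw_fst_app, rw_snd_app, img_fix, IH1, IH2. split; reflexivity.
Qed.

Lemma fmap_app : forall u v, fmap (u ++ v) = fmap u ++ fmap v.
Proof. intros; unfold fmap, eval_word; apply flat_map_app. Qed.

Theorem mainTheorem8 :
  exists f : F2w -> FVBw,
    iso_F2_onto (in_gen_subgroup (fun b : bool => if b then h1 else h0)) f.
Proof.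
  exists fmap. split; [|split; [|split]].
  -
    induction 1.
    + apply pe_refl.
    + apply pe_sym; auto.
    + eapply pe_trans; eauto.
    + rewrite !fmap_app.
      change (fmap [x; linv x]) with
        ((if snd x then winv (img (fst x)) else img (fst x)) ++
         (if negb (snd x) then winv (img (fst x)) else img (fst x)) ++ []).
      rewrite app_nil_r.
      destruct (snd x); simpl.
      * pose proof (pe_cancel_w fvb3_rel (winv (img (fst x))) (fmap u) (fmap v)) as P.
        rewrite winv_winv in P. rewrite <- app_assoc. exact P.
      * rewrite <- app_assoc. apply pe_cancel_w.
    + destruct H.
  - intros; rewrite fmap_app; apply pe_refl.
  - intros u v H.
    pose proof (invariance _ _ H P123) as HI. unfold Inv in HI.
    destruct (rw_f u) as [_ Hu]. destruct (rw_f v) as [_ Hv].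
    rewrite Hu, Hv in HI. injection HI as HI1 HI2.
    set (q := reduce (u ++ winv v)).
    assert (Hq : q = []).
    { apply Psi_inj0; [apply reduce_reduced|].
      unfold q. rewrite Psi_reduce, Psi_app, Psi_winv, reduce_B, HI2, <- reduce_B.
      apply reduce_ww. }
    unfold free_eq.
    eapply pe_trans.
    + apply pe_sym. pose proof (pe_cancel_w (fun _ : word bool => False) (winv v) u []) as P.
      rewrite winv_winv, !app_nil_r in P. exact P.
    + pose proof (pe_reduce (fun _ : word bool => False) (u ++ winv v)) as P.
      fold q in P. rewrite Hq in P.
      pose proof (pe_ctx _ _ _ P [] v) as P2. simpl in P2. rewrite app_assoc. exact P2.
  - intros w. unfold in_gen_subgroup. reflexivity.
Qed.
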